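(* Let $S$ and $R$ be finite sequences of propositional formulae. The sequence $S \cdot R$ is not equivalent to $S$ if and only if there exist models $I$ and $J$ such that $I \leq_S J$, $J \leq_S I$ and $I \not\leq_R J$ all hold.
   Context: Models are truth assignments. For a formula $G$: $I \leq_G J$ iff $I \models G$ or $J \not\models G$. For a sequence $S=[S_1,\ldots,S_m]$: $I \leq_S J$ iff either $S=[]$, or ($I \leq_{S_1} J$ and (either $J \not\leq_{S_1} I$ or $I \leq_{S'} J$)), where $S'=[S_2,\ldots,S_m]$. Two sequences are equivalent if their orders coincide on all pairs of models. $S\cdot R$ denotes concatenation of sequences. *)

(* Defs.v *)
From Stdlib Require Import List.
Import ListNotations.

Inductive formula : Type :=
  | FVar : nat -> formula
  | FTrue : formula
  | FFalse : formula
  | FNot : formula -> formula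
  | FAnd : formula -> formula -> formula
  | FOr : formula -> formula -> formula
  | FImp : formula -> formula -> formula.

Definition model := nat -> bool.

Fixpoint sat (I : model) (G : formula) : Prop :=
  match G with
  | FVar n => I n = true
  | FTrue => True
  | FFalse => False
  | FNot a => ~ sat I a
  | FAnd a b => sat I a /\ sat I b
  | FOr a b => sat I a \/ sat I b
  | FImp a b => sat I a -> sat I b
  end.

Definition le_f (G : formula) (I J : model) : Prop := sat I G \/ ~ sat J G.

Fixpoint le_seq (S : list formula) (I J : model) : Prop :=
  match S with
  | [] => True
  | S1 :: S' => le_f S1 I J /\ (~ le_f S1 J I \/ le_seq S' I J)
  end.

Definition seq_equiv (S1 S2 : list formula) : Prop :=
  forall I J : model, le_seq S1 I J <-> le_seq S2 I J.

(* Main.v *)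
Require Import Defs.
From Stdlib Require Import List Classical.
Import ListNotations.

Lemma app_le (S R : list formula) (I J : model) :
  le_seq (S ++ R) I J <-> le_seq S I J /\ (~ le_seq S J I \/ le_seq R I J).
Proof.
  induction S as [|F S IH]; simpl.
  - tauto.
  - rewrite IH. destruct (classic (le_f F J I)); destruct (classic (le_f F I J));
    destruct (classic (le_seq S I J)); destruct (classic (le_seq S J I));
    destruct (classic (le_seq R I J)); tauto.
Qed.

Theorem lemma2 (S R : list formula) :
  ~ seq_equiv (S ++ R) S <->
  exists I J : model, le_seq S I J /\ le_seq S J I /\ ~ le_seq R I J.
Proof.
  split.
  - intro H. apply NNPP. intro Hn. apply H. intros I J. rewrite app_le.
    split; [tauto|]. intro HS. split; [exact HS|].
    destruct (classic (le_seq R I J)) as [HR|HR]; [tauto|].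
    left. intro HJ. apply Hn. exists I, J. tauto.
  - intros [I [J [H1 [H2 H3]]]] He.
    pose proof (proj2 (He I J) H1) as H. rewrite app_le in H. tauto.
Qed.
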